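(* Consider the four-oscillator system below with $\alpha_\mathrm{s}=\frac{\pi}{2}$, $\alpha_\mathrm{n}=0$ and arbitrary $A\in\mathbb{R}$, $\omega\in\mathbb{R}$. Then the function $$H^{(-1,0)}(\psi_1,\psi_3)=\cot\!\left(\frac{\psi_1+\psi_3}{4}\right)\tan\!\left(\frac{\psi_1-\psi_3}{4}\right)$$ (with $\psi_1,\psi_3$ the real-valued phase differences of a solution) is constant along every solution on any time interval on which it is defined (i.e. on which $(\psi_1+\psi_3)/4\notin\pi\mathbb{Z}$ and $(\psi_1-\psi_3)/4\notin \pi/2+\pi\mathbb{Z}$).
   Context: Network of $M=2$ populations of $N=2$ phase oscillators with phases $\theta_{\sigma,k}(t)\in\mathbb{R}$ (population $\sigma\in\{1,2\}$, oscillator $k\in\{1,2\}$), evolving by $$\dot\theta_{\sigma,k}=\omega+\frac{K_\mathrm{s}}{4}\sum_{j=1}^{2}\sin(\theta_{\sigma,j}-\theta_{\sigma,k}-\alpha_\mathrm{s})+\frac{K_\mathrm{n}}{4}\sum_{j=1}^{2}\sin(\theta_{\tau,j}-\theta_{\sigma,k}-\alpha_\mathrm{n}),$$ where $\tau$ denotes the population other than $\sigma$, $\omega\in\mathbb{R}$, $\alpha_\mathrm{s},\alpha_\mathrm{n}\in\mathbb{R}$ are phase lags, and the coupling strengths are parametrized by $A\in\mathbb{R}$ via $K_\mathrm{s}=(1+A)/2$, $K_\mathrm{n}=(1-A)/2$ (so $K_\mathrm{s}+K_\mathrm{n}=1$, $A=K_\mathrm{s}-K_\mathrm{n}$). The phase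 differences are $\psi_1=\theta_{1,1}-\theta_{1,2}$, $\psi_2=\theta_{1,2}-\theta_{2,1}$, $\psi_3=\theta_{2,1}-\theta_{2,2}$; they satisfy an autonomous ODE (the reduced system) since the right-hand side depends only on phase differences. *)

(* Defs.v *)
From Stdlib Require Import Reals.
Open Scope R_scope.

Definition other (s : nat) : nat := if Nat.eqb s 1 then 2%nat else 1%nat.

(* Right-hand side of the M=2, N=2 network for oscillator (s,k), given the
   instantaneous phases th s j (s, j in {1,2}). *)
Definition rhs (omega Ks Kn als aln : R) (th : nat -> nat -> R) (s k : nat) : R :=
  omega
  + Ks / 4 * (sin (th s 1%nat - th s k - als) + sin (th s 2%nat - th s k - als))
  + Kn / 4 * (sin (th (other s) 1%nat - th s k - aln)
              + sin (th (other s) 2%nat - th s k - aln)).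

Definition is_solution_on (omega A als aln a b : R)
    (theta : nat -> nat -> R -> R) : Prop :=
  forall t, a < t < b ->
  forall s k, (s = 1 \/ s = 2)%nat -> (k = 1 \/ k = 2)%nat ->
    derivable_pt_lim (theta s k) t
      (rhs omega ((1 + A) / 2) ((1 - A) / 2) als aln
           (fun s' k' => theta s' k' t) s k).

Definition cot (x : R) : R := cos x / sin x.

Definition psi1 (theta : nat -> nat -> R -> R) (t : R) : R :=
  theta 1%nat 1%nat t - theta 1%nat 2%nat t.
Definition psi3 (theta : nat -> nat -> R -> R) (t : R) : R :=
  theta 2%nat 1%nat t - theta 2%nat 2%nat t.

Definition H_m10 (p1 p3 : R) : R := cot ((p1 + p3) / 4) * tan ((p1 - p3) / 4).

Definition H_defined (p1 p3 : R) : Prop :=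
  (forall z : Z, (p1 + p3) / 4 <> IZR z * PI) /\
  (forall z : Z, (p1 - p3) / 4 <> PI / 2 + IZR z * PI).

(* Main.v *)
Require Import Defs.
From Stdlib Require Import Reals Lra.
From Coquelicot Require Import Coquelicot.
Open Scope R_scope.
Lemma sinmpi2 z : sin (z - PI/2) = - cos z.
Proof. rewrite sin_minus, cos_PI2, sin_PI2; ring. Qed.

Lemma key om Ks Kn (th : nat -> nat -> R) :
  let d s k := rhs om Ks Kn (PI/2) 0 th s k in
  let h1 := (th 1%nat 1%nat - th 1%nat 2%nat)/2 in
  let h3 := (th 2%nat 1%nat - th 2%nat 2%nat)/2 in
  (d 1%nat 1%nat - d 1%nat 2%nat + (d 2%nat 1%nat - d 2%nat 2%nat)) * sin (h1 - h3)
  = (d 1%nat 1%nat - d 1%nat 2%nat - (d 2%nat 1%nat - d 2%nat 2%nat)) * sin (h1 + h3).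
Proof.
  intros d h1 h3; unfold d, rhs, other; simpl.
  rewrite !sinmpi2, !Rminus_diag, !cos_0, !Rminus_0_r.
  unfold h1, h3.
  set (u := th 1%nat 1%nat); set (v := th 1%nat 2%nat);
  set (x := th 2%nat 1%nat); set (y := th 2%nat 2%nat).
  set (m := (u+v)/2); set (n := (x+y)/2); set (a := (u-v)/2); set (b := (x-y)/2).
  replace u with (m+a) by (unfold m, a; field).
  replace v with (m-a) by (unfold m, a; field).
  replace x with (n+b) by (unfold n, b; field).
  replace y with (n-b) by (unfold n, b; field).
  replace ((m+a - (m-a))/2) with a by field.
  replace ((n+b - (n-b))/2) with b by field.
  repeat rewrite ?sin_plus, ?sin_minus, ?cos_plus, ?cos_minus.
  ring.
Qed.

Lemma isd_plus f g x df dg: is_derive f x df -> is_derive g x dg -> is_derive (fun t => f t + g t) x (df+dg).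
Proof. intros; exact (is_derive_plus f g x df dg H H0). Qed.
Lemma isd_minus f g x df dg: is_derive f x df -> is_derive g x dg -> is_derive (fun t => f t - g t) x (df-dg).
Proof. intros; exact (is_derive_minus f g x df dg H H0). Qed.
Lemma isd_mult f g x df dg: is_derive f x df -> is_derive g x dg -> is_derive (fun t => f t * g t) x (df * g x + f x * dg).
Proof. intros; exact (is_derive_mult f g x df dg H H0 Rmult_comm). Qed.
Lemma isd_comp f g x df dg: is_derive f (g x) df -> is_derive g x dg -> is_derive (fun t => f (g t)) x (dg * df).
Proof. intros; exact (is_derive_comp f g x df dg H H0). Qed.

Ltac req := match goal with |- ?x = ?y => change (@eq R x y) end.

Lemma isd_eq (f : R -> R) x l l' : l = l' -> is_derive f x l -> is_derive f x l'.
Proof. intros ->; auto. Qed.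

Lemma alg sP cP sQ cQ dP dQ :
  sP <> 0 -> cQ <> 0 -> sP^2 + cP^2 = 1 -> sQ^2 + cQ^2 = 1 ->
  dP * (2 * sQ * cQ) = dQ * (2 * sP * cP) ->
  ((dP * - sP) * sP - cP * (dP * cP)) / sP ^ 2 * (sQ / cQ)
  + cP / sP * (((dQ * cQ) * cQ - sQ * (dQ * - sQ)) / cQ ^ 2) = 0.
Proof.
  intros hs hc p1 p2 k.
  replace (((dP * - sP) * sP - cP * (dP * cP)) / sP ^ 2 * (sQ / cQ)
  + cP / sP * (((dQ * cQ) * cQ - sQ * (dQ * - sQ)) / cQ ^ 2))
  with ((dQ * sP * cP * (sQ^2 + cQ^2) - dP * sQ * cQ * (sP^2+cP^2)) / (sP^2 * cQ^2))
  by (field; auto).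
  rewrite p1, p2. replace (dQ * sP * cP * 1 - dP * sQ * cQ * 1) with 0 by lra.
  unfold Rdiv; ring.
Qed.

Theorem mainTheorem6 :
  forall (A omega a b : R) (theta : nat -> nat -> R -> R),
    is_solution_on omega A (PI / 2) 0 a b theta ->
    (forall t, a < t < b -> H_defined (psi1 theta t) (psi3 theta t)) ->
    forall t1 t2, a < t1 < b -> a < t2 < b ->
      H_m10 (psi1 theta t1) (psi3 theta t1) = H_m10 (psi1 theta t2) (psi3 theta t2).
Proof.
  intros A om a b theta Hsol Hdef.
  set (Hf := fun t => H_m10 (psi1 theta t) (psi3 theta t)).
  assert (D : forall t, a < t < b -> derivable_pt_lim Hf t 0).
  { intros t ht. apply is_derive_Reals.
    set (d := fun s k => rhs om ((1 + A) / 2) ((1 - A) / 2) (PI/2) 0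
           (fun s' k' => theta s' k' t) s k).
    assert (Dt : forall s k, (s = 1 \/ s = 2)%nat -> (k = 1 \/ k = 2)%nat ->
               is_derive (theta s k) t (d s k)).
    { intros s k hs hk; apply is_derive_Reals; apply Hsol; auto. }
    set (P := fun t => (psi1 theta t + psi3 theta t) / 4).
    set (Q := fun t => (psi1 theta t - psi3 theta t) / 4).
    set (dP := (d 1%nat 1%nat - d 1%nat 2%nat + (d 2%nat 1%nat - d 2%nat 2%nat)) / 4).
    set (dQ := (d 1%nat 1%nat - d 1%nat 2%nat - (d 2%nat 1%nat - d 2%nat 2%nat)) / 4).
    assert (D11 := Dt 1%nat 1%nat ltac:(auto) ltac:(auto)).
    assert (D12 := Dt 1%nat 2%nat ltac:(auto) ltac:(auto)).
    assert (D21 := Dt 2%nat 1%nat ltac:(auto) ltac:(auto)).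
    assert (D22 := Dt 2%nat 2%nat ltac:(auto) ltac:(auto)).
    assert (DP : is_derive P t dP).
    { apply is_derive_ext with (fun t => /4 * ((theta 1%nat 1%nat t - theta 1%nat 2%nat t) + (theta 2%nat 1%nat t - theta 2%nat 2%nat t))).
      { intros s; unfold P, psi1, psi3. req; unfold Rdiv; ring. }
      eapply isd_eq; [| apply is_derive_scal, isd_plus; apply isd_minus; eauto].
      unfold dP. req; unfold Rdiv; ring. }
    assert (DQ : is_derive Q t dQ).
    { apply is_derive_ext with (fun t => /4 * ((theta 1%nat 1%nat t - theta 1%nat 2%nat t) - (theta 2%nat 1%nat t - theta 2%nat 2%nat t))).
      { intros s; unfold Q, psi1, psi3. req; unfold Rdiv; ring. }
      eapply isd_eq; [| apply is_derive_scal, isd_minus; apply isd_minus; eauto].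
      unfold dQ. req; unfold Rdiv; ring. }
    assert (cP := isd_comp cos P t _ _ (is_derive_cos _) DP).
    assert (sP := isd_comp sin P t _ _ (is_derive_sin _) DP).
    assert (cQ := isd_comp cos Q t _ _ (is_derive_cos _) DQ).
    assert (sQ := isd_comp sin Q t _ _ (is_derive_sin _) DQ).
    destruct (Hdef t ht) as [h1 h2].
    assert (nsP : sin (P t) <> 0).
    { intro e; destruct (sin_eq_0_0 _ e) as [z hz]; apply (h1 z); exact hz. }
    assert (ncQ : cos (Q t) <> 0).
    { intro e; destruct (cos_eq_0_0 _ e) as [z hz]; apply (h2 z); rewrite Rplus_comm; exact hz. }
    assert (E := isd_mult _ _ t _ _ (is_derive_div _ _ t _ _ cP sP nsP)
                   (is_derive_div _ _ t _ _ sQ cQ ncQ)).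
    apply is_derive_ext with (g := Hf) in E.
    2:{ intros s; unfold Hf, H_m10, cot, tan. reflexivity. }
    eapply isd_eq; [| exact E].
    apply alg; auto.
    - pose proof (sin2_cos2 (P t)) as HH; unfold Rsqr in HH; nra.
    - pose proof (sin2_cos2 (Q t)) as HH; unfold Rsqr in HH; nra.
    - rewrite <- !sin_2a.
      replace (2 * P t) with ((psi1 theta t + psi3 theta t)/2) by (unfold P; field).
      replace (2 * Q t) with ((psi1 theta t - psi3 theta t)/2) by (unfold Q; field).
      pose proof (key om ((1 + A) / 2) ((1 - A) / 2) (fun s' k' => theta s' k' t)) as K.
      simpl in K. unfold dP, dQ, d, psi1, psi3.
      replace ((theta 1%nat 1%nat t - theta 1%nat 2%nat t + (theta 2%nat 1%nat t - theta 2%nat 2%nat t)) / 2)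
        with ((theta 1%nat 1%nat t - theta 1%nat 2%nat t)/2 + (theta 2%nat 1%nat t - theta 2%nat 2%nat t) / 2) by field.
      replace ((theta 1%nat 1%nat t - theta 1%nat 2%nat t - (theta 2%nat 1%nat t - theta 2%nat 2%nat t)) / 2)
        with ((theta 1%nat 1%nat t - theta 1%nat 2%nat t)/2 - (theta 2%nat 1%nat t - theta 2%nat 2%nat t) / 2) by field.
      lra. }
  intros t1 t2 h1 h2.
  change (Hf t1 = Hf t2).
  destruct (Rtotal_order t1 t2) as [lt|[eq|gt]].
  - destruct (MVT_cor2 Hf (fun _ => 0) t1 t2 lt) as [c [hc _]].
    { intros c hc; apply D; lra. }
    lra.
  - subst; reflexivity.
  - destruct (MVT_cor2 Hf (fun _ => 0) t2 t1 gt) as [c [hc _]].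
    { intros c hc; apply D; lra. }
    lra.
Qed.
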